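(* Let $N\geq 2$ and let $P_N(z)=z^N+\sum_{m=1}^{N} c_m z^{N-m}=\prod_{n=1}^{N}(z-x_n)$ be a monic polynomial with complex coefficients $c_1,\dots,c_N$ and zeros $x_1,\dots,x_N$. Choose complex numbers $y_1(0),\dots,y_N(0)$, pairwise distinct, and define $$\gamma_m(0)=(-1)^m\sum_{N\geq n_1>n_2>\dots>n_m\geq 1} y_{n_1}(0)\,y_{n_2}(0)\cdots y_{n_m}(0),\qquad m=1,\dots,N,$$ so that $z^N+\sum_{m=1}^N\gamma_m(0)z^{N-m}=\prod_{n=1}^N(z-y_n(0))$. Let $y_1(t),\dots,y_N(t)$, $t$ real, be the solution with these initial values of the system $$\dot y_n(t)=-\Big\{\prod_{\ell=1,\ \ell\neq n}^{N}\big[y_n(t)-y_\ell(t)\big]^{-1}\Big\}\sum_{m=1}^{N}\big[c_m-\gamma_m(0)\big]\,\big[y_n(t)\big]^{N-m},\qquad n=1,\dots,N,$$ and suppose this solution exists on the whole interval $0\leq t\leq 1$ with $y_n(t)\neq y_\ell(t)$ for all $n\neq \ell$ and all $t\in[0,1]$. Then $x_n=y_n(1)$ for $n=1,\dots,N$ (as unordered sets, i.e. up to relabelling, $\{y_1(1),\dots,y_N(1)\}$ is the set of zeros of $P_N$ counted with multiplicity).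
   Context: A superimposed dot denotes differentiation with respect to the real variable $t$. The zeros of a polynomial are regarded as an unordered set. *)

(* Defs.v *)
From HB Require Import structures.
From mathcomp Require Import all_boot all_order all_algebra all_fingroup.
From mathcomp Require Import all_classical all_reals all_analysis.
From mathcomp Require Import complex.

Set Implicit Arguments.
Unset Strict Implicit.
Unset Printing Implicit Defensive.

Import Order.TTheory GRing.Theory Num.Theory.
Import numFieldNormedType.Exports.
Local Open Scope ring_scope.
Local Open Scope classical_set_scope.

Definition has_cderiv {R : realType} (f : R -> R[i]) (t : R) (l : R[i]) : Prop :=
  is_derive t 1 (fun s => complex.Re (f s)) (complex.Re l) /\
  is_derive t 1 (fun s => complex.Im (f s)) (complex.Im l).

Definition ccontinuous_on {R : realType} (A : set R) (f : R -> R[i]) : Prop :=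
  {within A, continuous (fun s => complex.Re (f s))} /\
  {within A, continuous (fun s => complex.Im (f s))}.

(* gamma_m = (-1)^m * sum_{N >= n_1 > ... > n_m >= 1} y_{n_1} ... y_{n_m};
   strictly decreasing m-tuples of indices are the same as m-element subsets. *)
Definition gamma {R : realType} {N : nat} (y : 'I_N -> R[i]) (m : nat) : R[i] :=
  (-1) ^+ m * \sum_(S : {set 'I_N} | #|S| == m) \prod_(n in S) y n.

(* Main.v *)
Set Warnings "-all".
Set Implicit Arguments. Unset Strict Implicit.
Require Import Defs.
From HB Require Import structures.
From mathcomp Require Import all_boot all_order all_algebra all_fingroup.
From mathcomp Require Import all_classical all_reals all_analysis.
From mathcomp Require Import complex.
From mathcomp Require Import ring lra zify.

Import Order.TTheory GRing.Theory Num.Theory.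
Import numFieldNormedType.Exports.
Local Open Scope ring_scope.
Local Open Scope classical_set_scope.

Section C.
Variable R : realType.
Implicit Types (f g : R -> R[i]).

Lemma ReM (a b : R[i]) : complex.Re (a*b) = complex.Re a * complex.Re b - complex.Im a * complex.Im b.
Proof. by case: a => ? ?; case: b. Qed.
Lemma ImM (a b : R[i]) : complex.Im (a*b) = complex.Re a * complex.Im b + complex.Im a * complex.Re b.
Proof. by case: a => ? ?; case: b. Qed.
Lemma ReB (a b : R[i]) : complex.Re (a-b) = complex.Re a - complex.Re b.
Proof. by case: a => ? ?; case: b. Qed.
Lemma ImB (a b : R[i]) : complex.Im (a-b) = complex.Im a - complex.Im b.
Proof. by case: a => ? ?; case: b. Qed.
Lemma ReD (a b : R[i]) : complex.Re (a+b) = complex.Re a + complex.Re b.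
Proof. by case: a => ? ?; case: b. Qed.
Lemma ImD (a b : R[i]) : complex.Im (a+b) = complex.Im a + complex.Im b.
Proof. by case: a => ? ?; case: b. Qed.
Lemma ReN (a : R[i]) : complex.Re (-a) = - complex.Re a.
Proof. by case: a. Qed.
Lemma ImN (a : R[i]) : complex.Im (-a) = - complex.Im a.
Proof. by case: a. Qed.
Lemma Re1 : complex.Re (1 : R[i]) = 1. Proof. by []. Qed.
Lemma Im1 : complex.Im (1 : R[i]) = 0. Proof. by []. Qed.
Lemma ceqP (a b : R[i]) : complex.Re a = complex.Re b -> complex.Im a = complex.Im b -> a = b.
Proof. by case: a => ? ?; case: b => ? ? /= -> ->. Qed.

Lemma cderiv_mul f g t (f' g' : R[i]) : has_cderiv f t f' -> has_cderiv g t g' ->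
  has_cderiv (fun s => f s * g s) t (f' * g t + f t * g').
Proof.
move=> [fr fi] [gr gi]; split.
- have -> : (fun s => complex.Re (f s * g s)) =
    (fun s => complex.Re (f s)) * (fun s => complex.Re (g s)) -
    (fun s => complex.Im (f s)) * (fun s => complex.Im (g s)).
    by apply: funext => s; rewrite ReM.
  apply: is_derive_eq.
  rewrite ReD !ReM; rewrite /GRing.scale /=; lra.
- have -> : (fun s => complex.Im (f s * g s)) =
    (fun s => complex.Re (f s)) * (fun s => complex.Im (g s)) +
    (fun s => complex.Im (f s)) * (fun s => complex.Re (g s)).
    by apply: funext => s; rewrite ImM.
  apply: is_derive_eq.
  rewrite ImD !ImM; rewrite /GRing.scale /=; lra.
Qed.

Lemma cderiv_ext f g t l l' : (forall s, f s = g s) -> l = l' -> has_cderiv f t l -> has_cderiv g t l'.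
Proof. by move=> /funext -> ->. Qed.

Lemma cderiv_cst (a : R[i]) t : has_cderiv (fun _ => a) t 0.
Proof. by split; apply: is_derive_cst. Qed.

Lemma cderiv_subl f t (f' z : R[i]) : has_cderiv f t f' -> has_cderiv (fun s => z - f s) t (- f').
Proof.
move=> [fr fi]; split.
- have -> : (fun s => complex.Re (z - f s)) = cst (complex.Re z) - (fun s => complex.Re (f s)).
    by apply: funext => s; rewrite ReB.
  by apply: is_derive_eq; rewrite ReN sub0r.
- have -> : (fun s => complex.Im (z - f s)) = cst (complex.Im z) - (fun s => complex.Im (f s)).
    by apply: funext => s; rewrite ImB.
  by apply: is_derive_eq; rewrite ImN sub0r.
Qed.

Lemma cderiv_prod (I : eqType) (r : seq I) (F : I -> R -> R[i]) (F' : I -> R[i]) t :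
  uniq r -> (forall i, i \in r -> has_cderiv (F i) t (F' i)) ->
  has_cderiv (fun s => \prod_(i <- r) F i s) t
    (\sum_(i <- r) F' i * \prod_(j <- r | j != i) F j t).
Proof.
elim: r => [|a r IH] /=.
  move=> _ _; apply: (cderiv_ext _ _ (cderiv_cst 1 t)) => [s|]; by rewrite big_nil.
move=> /andP[anr ur] hd.
have hr := IH ur (fun i ir => hd i (mem_behead (s := a :: r) ir)).
have ha := hd a (mem_head a r).
apply: (cderiv_ext _ _ (cderiv_mul ha hr)) => [s|]; first by rewrite big_cons.
rewrite big_cons big_cons eqxx /=.
have -> : \prod_(j <- r | j != a) F j t = \prod_(j <- r) F j t.
  rewrite -big_filter (@eq_in_filter _ _ predT) ?filter_predT // => j jr /=.
  by apply/eqP => ja; move: anr; rewrite -ja jr.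
congr (_ + _); rewrite big_distrr /= big_seq [RHS]big_seq; apply: eq_bigr => i ir.
rewrite big_cons; have -> : (a != i) by apply/eqP => ai; move: anr; rewrite ai ir.
by rewrite mulrCA.
Qed.

Definition ccvg {T} (F : set_system T) (f : T -> R[i]) (l : R[i]) :=
  (fun s => complex.Re (f s)) @ F --> complex.Re l /\
  (fun s => complex.Im (f s)) @ F --> complex.Im l.

Lemma ccvg_mul {T} (F : set_system T) {FF : Filter F} (f g : T -> R[i]) a b :
  ccvg F f a -> ccvg F g b -> ccvg F (fun s => f s * g s) (a * b).
Proof.
move=> [fr fi] [gr gi]; split.
- have -> : (fun s => complex.Re (f s * g s)) =
    ((fun s => complex.Re (f s)) \* (fun s => complex.Re (g s))) -
    ((fun s => complex.Im (f s)) \* (fun s => complex.Im (g s))).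
    by apply: funext => s; rewrite ReM.
  by rewrite ReM; apply: cvgB; apply: cvgM.
- have -> : (fun s => complex.Im (f s * g s)) =
    ((fun s => complex.Re (f s)) \* (fun s => complex.Im (g s))) +
    ((fun s => complex.Im (f s)) \* (fun s => complex.Re (g s))).
    by apply: funext => s; rewrite ImM.
  by rewrite ImM; apply: cvgD; apply: cvgM.
Qed.

Lemma ccvg_subl {T} (F : set_system T) {FF : Filter F} (f : T -> R[i]) a z :
  ccvg F f a -> ccvg F (fun s => z - f s) (z - a).
Proof.
move=> [fr fi]; split.
- have -> : (fun s => complex.Re (z - f s)) = cst (complex.Re z) - (fun s => complex.Re (f s)).
    by apply: funext => s; rewrite ReB.
  by rewrite ReB; apply: cvgB => //; apply: cvg_cst.
- have -> : (fun s => complex.Im (z - f s)) = cst (complex.Im z) - (fun s => complex.Im (f s)).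
    by apply: funext => s; rewrite ImB.
  by rewrite ImB; apply: cvgB => //; apply: cvg_cst.
Qed.

Lemma ccvg_prod {T} (F : set_system T) {FF : Filter F} (I : Type) (r : seq I)
   (G : I -> T -> R[i]) (a : I -> R[i]) :
  (forall i, ccvg F (G i) (a i)) ->
  ccvg F (fun s => \prod_(i <- r) G i s) (\prod_(i <- r) a i).
Proof.
move=> h; elim: r => [|b r IH].
  have -> : (fun s => \prod_(i <- [::]) G i s) = fun=> 1 by apply: funext => s; rewrite big_nil.
  by rewrite big_nil; split; apply: cvg_cst.
have -> : (fun s => \prod_(i <- b :: r) G i s) = fun s => G b s * \prod_(i <- r) G i s.
  by apply: funext => s; rewrite big_cons.
by rewrite big_cons; apply: ccvg_mul.
Qed.

Lemma size_prod_ne N (u : 'I_N -> R[i]) (n : 'I_N) :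
  (size (\prod_(l < N | l != n) ('X - (u l)%:P))%R <= N)%N.
Proof.
rewrite size_prod => [|l _]; last by rewrite polyXsubC_eq0.
under eq_bigr => l _ do rewrite size_XsubC.
rewrite sum_nat_const.
have : (#|[pred l : 'I_N | l != n]| = N.-1)%N.
  by rewrite -[in RHS](card_ord N) -(cardC1 n); apply: eq_card => l.
move=> ->; case: N u n => [|N] u n; first by case: n.
rewrite /= ; lia.
Qed.

Lemma lagrange N (u : 'I_N -> R[i]) (Q : {poly R[i]}) z :
  (forall n l, n != l -> u n != u l) -> (size Q <= N)%N ->
  \sum_(n < N) Q.[u n] * (\prod_(l < N | l != n) (u n - u l))^-1
     * \prod_(l < N | l != n) (z - u l) = Q.[z].
Proof.
move=> hu hQ.
set D := \sum_(n < N) (Q.[u n] * (\prod_(l < N | l != n) (u n - u l))^-1)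
     *: \prod_(l < N | l != n) ('X - (u l)%:P)%R - Q.
have hD x : D.[x] = \sum_(n < N) Q.[u n] * (\prod_(l < N | l != n) (u n - u l))^-1
     * \prod_(l < N | l != n) (x - u l) - Q.[x].
  rewrite /D hornerD hornerN horner_sum; congr (_ - _); apply: eq_bigr => n _.
  by rewrite hornerZ horner_prod; congr (_ * _); apply: eq_bigr => l _; rewrite hornerXsubC.
suff D0 : D = 0 by apply/eqP; rewrite -subr_eq0 -hD D0 horner0.
apply: (@roots_geq_poly_eq0 _ _ (map u (enum 'I_N))).
- apply/allP => _ /mapP[k _ ->]; rewrite /root hD.
  rewrite (bigD1 k) //= [X in _ + X - _]big1 => [|n nk]; last first.
    by rewrite [X in _ * X](bigD1 k) 1?eq_sym //= subrr mul0r mulr0.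
  rewrite addr0 -mulrA mulVf ?mulr1 ?subrr //.
  by apply/prodf_neq0 => l lk; rewrite subr_eq0 hu // eq_sym.
- rewrite map_inj_uniq ?enum_uniq // => a b /eqP; apply: contraTeq; exact: hu.
- rewrite size_map size_enum_ord /D.
  apply: (leq_trans (size_polyD _ _)); rewrite geq_max size_polyN hQ andbT.
  apply: (leq_trans (size_sum _ _ _)); apply/bigmax_leqP => n _.
  exact: (leq_trans (size_scale_leq _ _) (size_prod_ne u n)).
Qed.

Lemma vieta N (u : 'I_N -> R[i]) z :
  \prod_(n < N) (z - u n) = z ^+ N + \sum_(1 <= m < N.+1) gamma u m * z ^+ (N - m).
Proof.
have -> : \prod_(n < N) (z - u n) = \prod_(n < N) (- u n + z).
  by apply: eq_bigr => n _; rewrite addrC.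
rewrite bigA_distr /=.
have E (J : {set 'I_N}) : \prod_(i < N) (if i \in J then - u i else z) =
    (-1) ^+ #|J| * \prod_(i in J) u i * z ^+ (N - #|J|).
  rewrite (bigID (mem J)) /=; congr (_ * _).
    rewrite (eq_bigr (fun i => - u i)); last by move=> i ->.
    by rewrite prodrN.
  rewrite (eq_bigr (fun i => z)) => [|i /negbTE -> //].
  rewrite prodr_const; congr (_ ^+ _).
  transitivity #|~: J|; first by apply: eq_card => i; rewrite inE.
  have e : #|~: J| = #|[predC J]| by apply: eq_card => i; rewrite !inE.
  rewrite e; move: (cardC J); rewrite card_ord; move: #|[predC J]| #|J| => a b; lia.
under eq_bigr => J _ do rewrite E.
rewrite (partition_big (fun J : {set 'I_N} => inord #|J| : 'I_N.+1) xpredT) //=.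
rewrite big_ord_recl /=.
have cJ (J : {set 'I_N}) : (#|J| <= N)%N by rewrite -[X in (_ <= X)%N](card_ord N) max_card.
congr (_ + _).
  rewrite (big_pred1 finset.set0) => [|J /=]; first by rewrite cards0 expr0 mul1r big_set0 mul1r subn0.
  apply/eqP/eqP => [/eqP|->]; last by rewrite cards0; apply/val_inj; rewrite /= inordK.
  rewrite -val_eqE /= inordK ?ltnS // cards_eq0 => /eqP //.
rewrite big_add1 /= big_mkord; apply: eq_bigr => m _.
rewrite /gamma mulr_sumr mulr_suml.
apply: eq_big => J.
  by rewrite -val_eqE /= inordK ?ltnS.
by move=> /eqP/(congr1 val); rewrite /= inordK ?ltnS // => ->.
Qed.
End C.

Section C.
Variable R : realType.
Lemma perm_from_prod N (x w : 'I_N -> R[i]) :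
  (forall z, \prod_(n < N) (z - x n) = \prod_(n < N) (z - w n)) ->
  exists s : 'S_N, forall n, x n = w (s n).
Proof.
move=> h.
pose p := \prod_(n < N) ('X - (x n)%:P).
pose q := \prod_(n < N) ('X - (w n)%:P).
have hP z : p.[z] = \prod_(n < N) (z - x n).
  by rewrite /p horner_prod; apply: eq_bigr => n _; rewrite hornerXsubC.
have hQ z : q.[z] = \prod_(n < N) (z - w n).
  by rewrite /q horner_prod; apply: eq_bigr => n _; rewrite hornerXsubC.
have pq : p = q.
  apply/eqP; rewrite -subr_eq0; apply/eqP.
  apply: (@roots_geq_poly_eq0 _ _ (map (fun k : nat => k%:R : R[i]) (iota 0 N.+1))).
  - apply/allP => _ /mapP[k _ ->]; rewrite /root hornerD hornerN hP hQ.
    by rewrite h subrr.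
  - rewrite map_inj_uniq ?iota_uniq // => a b /eqP; rewrite eqr_nat => /eqP.
    done.
  - have se : size (index_enum 'I_N) = N by rewrite [index_enum _]unlock -enumT size_enum_ord.
    rewrite size_map size_iota.
    apply: (leq_trans (size_polyD _ _)); rewrite geq_max size_polyN.
    have sp : size p = N.+1 by rewrite /p size_prod_XsubC se.
    have sq : size q = N.+1 by rewrite /q size_prod_XsubC se.
    by rewrite sp sq leqnn.
have ie : index_enum 'I_N = enum 'I_N by rewrite [index_enum _]unlock -enumT.
have hp : perm_eq (map x (index_enum 'I_N)) (map w (index_enum 'I_N)).
  by apply: prod_XsubC_eq; rewrite !big_map; exact: pq.
have hp' : perm_eq [tuple x i | i < N] [tuple w i | i < N].
  by rewrite /= -ie.
case/tuple_permP: hp' => s hs; exists s => n.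
have := congr1 (fun tt => tnth tt n) (val_inj hs).
by rewrite !tnth_mktuple.
Qed.
End C.

Theorem mainTheorem1 (R : realType) (N : nat) (c : nat -> R[i])
    (x : 'I_N -> R[i]) (y : R -> 'I_N -> R[i]) :
  (2 <= N)%N ->
  (* P_N(z) = z^N + sum_{m=1}^N c_m z^(N-m) = prod_n (z - x_n) *)
  (forall z : R[i],
      z ^+ N + \sum_(1 <= m < N.+1) c m * z ^+ (N - m) = \prod_(n < N) (z - x n)) ->
  (* pairwise distinct initial values *)
  (forall n l : 'I_N, n != l -> y 0 n != y 0 l) ->
  (* the solution exists (is continuous) on [0,1] ... *)
  (forall n : 'I_N, ccontinuous_on `[0, 1] (fun t => y t n)) ->
  (* ... and satisfies the ODE system *)
  (forall t : R, 0 < t < 1 -> forall n : 'I_N,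
      has_cderiv (fun s => y s n) t
        (- (\prod_(l < N | l != n) (y t n - y t l)^-1)
           * \sum_(1 <= m < N.+1) (c m - gamma (y 0) m) * (y t n) ^+ (N - m))) ->
  (* the y_n(t) stay pairwise distinct on [0,1] *)
  (forall t : R, 0 <= t <= 1 -> forall n l : 'I_N, n != l -> y t n != y t l) ->
  (* conclusion: the zeros are the y_n(1), up to relabelling *)
  exists s : 'S_N, forall n : 'I_N, x n = y 1 (s n).
Proof.
move=> N2 hc hy0 hcont hder hdist.
pose g m := c m - gamma (y 0) m.
pose Qp : {poly R[i]} := \sum_(1 <= m < N.+1) g m *: 'X^(N - m).
have hQ v : Qp.[v] = \sum_(1 <= m < N.+1) g m * v ^+ (N - m).
  by rewrite /Qp horner_sum; apply: eq_bigr => m _; rewrite hornerZ hornerXn.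
have sQ : (size Qp <= N)%N.
  rewrite /Qp; apply: (leq_trans (size_sum _ _ _)); apply/bigmax_leqP_seq => m.
  rewrite mem_index_iota => /andP[m1 _] _.
  apply: (leq_trans (size_scale_leq _ _)); rewrite size_polyXn; lia.
apply: perm_from_prod => z.
pose P s := \prod_(n < N) (z - y s n).
have hd t : 0 < t < 1 -> has_cderiv P t Qp.[z].
  move=> t01.
  have := @cderiv_prod R _ (index_enum 'I_N) (fun n s => z - y s n) _ t (index_enum_uniq _)
     (fun n _ => cderiv_subl z (hder t t01 n)).
  apply: cderiv_ext => // .
  have dist : forall n l : 'I_N, n != l -> y t n != y t l.
    by apply: hdist; case/andP: t01 => a b; rewrite !ltW.
  rewrite -(lagrange z dist sQ); apply: eq_bigr => n _.
  by rewrite hQ prodfV; rewrite /g; ring.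
have hcP : forall x0 : subspace (`[0, 1] : set R), ccvg (nbhs x0) (fun s => P s) (P x0).
  move=> x0; apply: (@ccvg_prod R _ _ _ _ _ (fun n s => z - y s n)) => n.
  apply: ccvg_subl; case: (hcont n) => h1 h2; split; [exact: (h1 x0) | exact: (h2 x0)].
have hre : complex.Re (P 1) - complex.Re (P 0) = complex.Re Qp.[z].
  have HD : forall s : R, s \in `]0, 1[%R -> is_derive s 1 (fun s => complex.Re (P s)) (complex.Re Qp.[z]).
    move=> s; rewrite in_itv /= => s01; exact: (hd s s01).1.
  have HC : {within `[(0:R), 1], continuous (fun s => complex.Re (P s))}.
    move=> x0; exact: (hcP x0).1.
  have [c0 _ ->] := @MVT R (fun s => complex.Re (P s)) (fun _ => complex.Re Qp.[z]) 0 1 ltr01 HD HC.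
  by rewrite subr0 mulr1.
have him : complex.Im (P 1) - complex.Im (P 0) = complex.Im Qp.[z].
  have HD : forall s : R, s \in `]0, 1[%R -> is_derive s 1 (fun s => complex.Im (P s)) (complex.Im Qp.[z]).
    move=> s; rewrite in_itv /= => s01; exact: (hd s s01).2.
  have HC : {within `[(0:R), 1], continuous (fun s => complex.Im (P s))}.
    move=> x0; exact: (hcP x0).2.
  have [c0 _ ->] := @MVT R (fun s => complex.Im (P s)) (fun _ => complex.Im Qp.[z]) 0 1 ltr01 HD HC.
  by rewrite subr0 mulr1.
have P1 : P 1 = P 0 + Qp.[z].
  by apply: ceqP; rewrite ?ReD ?ImD; [move: hre | move: him]; lra.
rewrite -hc; rewrite -/(P 1) P1 /P vieta hQ -addrA -big_split /=.
congr (_ + _); apply: eq_bigr => m _; rewrite /g; ring.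
Qed.
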